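(* Let $\varepsilon,\gamma>0$. There exists an $\varepsilon$-$\nabla_0$DP algorithm that, given a set $S$ of $n\ge\tilde O\!\left(\frac{1}{\varepsilon\gamma}\log d\right)$ labeled examples in $\{0,1\}^d\times\{0,1\}$ with $\mathrm{pol}(\perp)\ge2\gamma$, with probability at least $0.99$ outputs a prefix $p$ that is $\gamma$-polarizing and such that no prefix longer than $p$ is $2\gamma$-polarizing.
   Context: A prefix is a string $p\in\{0,1\}^\ell$, $0\le\ell\le d$; $\perp$ denotes the empty string. $f_{p*0}$ (resp. $f_{p*1}$) is the number of examples in $S$ of the form $(ps,0)$ (resp. $(ps,1)$) for some $s$. $\mathrm{pol}(p)=\min\{f_{p*0},f_{p*1}\}/n$, and $p$ is $\gamma$-polarizing if $\mathrm{pol}(p)\ge\gamma$. $\tilde O$ hides polylogarithmic factors (in $1/\gamma$ and $\log d$). Each example is a record in $\{0,1\}^{d+1}$ (label as an attribute); $M$ is $\varepsilon$-$\nabla_0$DP if for all datasets $S,S'$ differing only in one record and all sets $E$, $\Pr[M(S)\in E]\le e^{\varepsilon k}\Pr[M(S')\in E]$, where $k$ is the number of attributes on which the differing records differ. *)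

(* Defs.v *)
From HB Require Import structures.
From mathcomp Require Import all_boot all_order all_algebra.
From mathcomp Require Import reals sequences exp.
Set Implicit Arguments. Unset Strict Implicit. Unset Printing Implicit Defensive.
Import Order.TTheory GRing.Theory Num.Theory.
Local Open Scope ring_scope.

Definition example (d : nat) := (d.-tuple bool * bool)%type.

(* A dataset of n examples (a multiset, given as an n-tuple of records). *)
Definition dataset (d n : nat) := n.-tuple (example d).

Definition prefix (d : nat) := {l : 'I_d.+1 & l.-tuple bool}.
Definition pseq (d : nat) (p : prefix d) : seq bool := tval (tagged p).

Definition fcount (d : nat) (s : seq bool) (b : bool) (S : seq (example d)) : nat :=
  count (fun e : example d => (take (size s) (tval e.1) == s) && (e.2 == b)) S.

Definition pol (R : realType) (d n : nat) (s : seq bool) (S : dataset d n) : R :=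
  (minn (fcount s false S) (fcount s true S))%:R / n%:R.

Definition polarizing (R : realType) (d n : nat) (g : R) (s : seq bool)
  (S : dataset d n) : bool := g <= pol R s S.

Definition attr_dist (d : nat) (x y : example d) : nat :=
  #|[set i : 'I_d | tnth x.1 i != tnth y.1 i]| + (x.2 != y.2).

(* A randomized algorithm, described by its output distribution over prefixes. *)
Definition mechanism (R : realType) :=
  forall d n : nat, dataset d n -> {ffun prefix d -> R}.

Definition is_distribution (R : realType) (T : finType) (mu : {ffun T -> R}) : Prop :=
  (forall t, 0 <= mu t) /\ \sum_(t : T) mu t = 1.

Definition Pr (R : realType) (T : finType) (mu : {ffun T -> R}) (E : {set T}) : R :=
  \sum_(t in E) mu t.

Definition nabla0DP (R : realType) (eps : R) (M : mechanism R) : Prop :=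
  forall (d n : nat) (S S' : dataset d n) (i : 'I_n),
    (forall j : 'I_n, j != i -> tnth S j = tnth S' j) ->
    forall E : {set prefix d},
      Pr (M d n S) E <= expR (eps * (attr_dist (tnth S i) (tnth S' i))%:R)
                        * Pr (M d n S') E.

Definition good (R : realType) (g : R) (d n : nat) (S : dataset d n) : {set prefix d} :=
  [set p : prefix d | polarizing g (pseq p) S &&
     [forall q : prefix d, (size (pseq p) < size (pseq q))%N ==>
       ~~ polarizing (2 * g) (pseq q) S]].

(* Main.v *)
Require Import Defs.
From HB Require Import structures.
From mathcomp Require Import all_boot all_order all_algebra.
From mathcomp Require Import reals sequences exp.
From mathcomp Require Import ring lra.
Import Order.TTheory GRing.Theory Num.Theory.
Set Implicit Arguments. Unset Strict Implicit. Unset Printing Implicit Defensive.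
Local Open Scope ring_scope.

Lemma attr_dist_sym d (x y : example d) : attr_dist x y = attr_dist y x.
Proof.
rewrite /attr_dist eq_sym; congr (_ + _)%N.
by apply: eq_card => i; rewrite !inE eq_sym.
Qed.

Lemma attr_dist_refl d (x : example d) : attr_dist x x = 0%N.
Proof.
rewrite /attr_dist eqxx addn0; apply/eqP; rewrite cards_eq0; apply/eqP.
by apply/setP => i; rewrite !inE eqxx.
Qed.

Lemma attr_dist_tri d (x y z : example d) :
  (attr_dist x z <= attr_dist x y + attr_dist y z)%N.
Proof.
rewrite /attr_dist addnACA leq_add //.
  apply: (@leq_trans #|[set i : 'I_d | tnth x.1 i != tnth y.1 i] :|: [set i : 'I_d | tnth y.1 i != tnth z.1 i]|).
    apply: subset_leq_card; apply/subsetP => i; rewrite !inE.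
    by case: (tnth x.1 i); case: (tnth y.1 i); case: (tnth z.1 i).
  by rewrite cardsU leq_subr.
by case: (x.2); case: (y.2); case: (z.2).
Qed.

Lemma attr_dist_ge1 d (x y : example d) : x != y -> (1 <= attr_dist x y)%N.
Proof.
move=> xy; rewrite /attr_dist.
case e2: (x.2 == y.2); last by rewrite /= addn1.
move/eqP: e2 => e2; rewrite /= addn0 card_gt0; apply/set0Pn.
have : x.1 != y.1.
  apply: contra xy => /eqP e1; apply/eqP.
  by move: e1 e2; case: x => ? ?; case: y => ? ? /= -> ->.
move=> ne1.
case: (pickP (fun i => tnth x.1 i != tnth y.1 i)) => [i Hi|H].
  by exists i; rewrite inE.
exfalso; move/eqP: ne1; apply; apply: eq_from_tnth => i.
by move: (H i) => /negbFE/eqP.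
Qed.

Definition dsdist d n (S S' : dataset d n) : nat :=
  (\sum_(j < n) attr_dist (tnth S j) (tnth S' j))%N.

Lemma dsdist_nb d n (S S' S2 : dataset d n) (i : 'I_n) :
  (forall j : 'I_n, j != i -> tnth S j = tnth S' j) ->
  (dsdist S' S2 <= attr_dist (tnth S i) (tnth S' i) + dsdist S S2)%N.
Proof.
move=> H; rewrite /dsdist.
apply: (@leq_trans (\sum_(j < n) (attr_dist (tnth S' j) (tnth S j) + attr_dist (tnth S j) (tnth S2 j)))%N).
  by apply: leq_sum; move=> j _; apply: attr_dist_tri.
rewrite big_split /= leq_add2r (bigD1 i) //= big1 ?addn0; first by rewrite attr_dist_sym.
by move=> j /H ->; rewrite attr_dist_refl.
Qed.

Definition Pg (R : realType) (g : R) d n (S : dataset d n) (v : Defs.prefix d) : bool :=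
  polarizing (5/4 * g) (pseq v) S &&
  [forall q : Defs.prefix d, (size (pseq v) < size (pseq q))%N ==>
      ~~ polarizing (7/4 * g) (pseq q) S].

Definition wgt (R : realType) (c g : R) d n (S : dataset d n) (v : Defs.prefix d) : R :=
  \big[Order.max/0]_(S2 : dataset d n | Pg g S2 v) expR (- c * (dsdist S S2)%:R).

Definition Zs (R : realType) (c g : R) d n (S : dataset d n) : R :=
  \sum_(v : Defs.prefix d) wgt c g S v.

Definition mech (R : realType) (c g : R) : mechanism R :=
  fun d n S => [ffun v => if Zs c g S == 0 then (#|{: Defs.prefix d}|%:R)^-1
                          else wgt c g S v / Zs c g S].

Lemma wgt_ge0 (R : realType) (c g : R) d n (S : dataset d n) v : 0 <= wgt c g S v.
Proof.
rewrite /wgt; elim/big_ind: _ => //.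
  by move=> x y x0 y0; rewrite le_max x0.
by move=> S2 _; apply: expR_ge0.
Qed.

Lemma Zs_ge0 (R : realType) (c g : R) d n (S : dataset d n) : 0 <= Zs c g S.
Proof. by apply: sumr_ge0 => v _; apply: wgt_ge0. Qed.

Lemma wgt_nb (R : realType) (c g : R) d n (S S' : dataset d n) (i : 'I_n) v :
  0 <= c ->
  (forall j : 'I_n, j != i -> tnth S j = tnth S' j) ->
  wgt c g S v <= expR (c * (attr_dist (tnth S i) (tnth S' i))%:R) * wgt c g S' v.
Proof.
move=> c0 H; rewrite /wgt; apply: bigmax_le.
  by rewrite mulr_ge0 ?expR_ge0 // -/(wgt c g S' v) wgt_ge0.
move=> S2 PS2.
apply: (@le_trans _ _ (expR (c * (attr_dist (tnth S i) (tnth S' i))%:R) * expR (- c * (dsdist S' S2)%:R))).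
  rewrite -expRD ler_expR.
  have := dsdist_nb S2 H; rewrite -(ler_nat R) natrD => h.
  nra.
rewrite ler_wpM2l ?expR_ge0 //.
exact: (@le_bigmax_cond _ _ _ 0 S2 (fun S0 => Pg g S0 v) (fun S0 => expR (- c * (dsdist S' S0)%:R)) PS2).
Qed.

Lemma mech_dp (R : realType) (eps g : R) : 0 < eps -> nabla0DP eps (mech (eps/2) g).
Proof.
move=> ep d n S S' i H E.
set k := attr_dist (tnth S i) (tnth S' i).
have c0 : 0 <= eps/2 by rewrite divr_ge0 // ltW.
set e := expR (eps / 2 * k%:R).
have H' : forall j, j != i -> tnth S' j = tnth S j by move=> j /H ->.
have h1 v : wgt (eps/2) g S v <= e * wgt (eps/2) g S' v := wgt_nb g v c0 H.
have h2 v : wgt (eps/2) g S' v <= e * wgt (eps/2) g S v.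
  by have := wgt_nb g v c0 H'; rewrite attr_dist_sym.
have Z1 : Zs (eps/2) g S <= e * Zs (eps/2) g S'.
  by rewrite /Zs mulr_sumr; apply: ler_sum => v _; exact: h1.
have Z2 : Zs (eps/2) g S' <= e * Zs (eps/2) g S.
  by rewrite /Zs mulr_sumr; apply: ler_sum => v _; exact: h2.
have e1 : 1 <= e.
  apply: le_trans (expR_ge1Dx _); rewrite lerDl mulr_ge0 //.
have e0 : 0 <= e by apply: le_trans e1.
have ee : expR (eps * k%:R) = e * e by rewrite -expRD; congr expR; field.
rewrite /Pr ee.
case: (eqVneq (Zs (eps/2) g S) 0) => Z0.
  have Z0' : Zs (eps/2) g S' = 0.
    by apply/le_anti; rewrite Zs_ge0 andbT; move: Z2; rewrite Z0 mulr0.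
  rewrite (eq_bigr (fun v => mech (eps/2) g S' v)); last first.
    by move=> v _; rewrite !ffunE Z0 Z0' eqxx.
  rewrite -{1}[X in X <= _]mul1r ler_wpM2r ?mulr_ege1 //.
  by apply: sumr_ge0 => v _; rewrite ffunE Z0' eqxx invr_ge0 ler0n.
have Z0' : Zs (eps/2) g S' != 0.
  apply: contra_neq Z0 => Z'; apply/le_anti; rewrite Zs_ge0 andbT.
  by move: Z1; rewrite Z' mulr0.
have zp : 0 < Zs (eps/2) g S by rewrite lt_def Z0 Zs_ge0.
have zp' : 0 < Zs (eps/2) g S' by rewrite lt_def Z0' Zs_ge0.
rewrite mulr_sumr; apply: ler_sum => v _; rewrite !ffunE (negbTE Z0) (negbTE Z0').
rewrite ler_pdivrMr //; apply: le_trans (h1 v) _.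
set q := wgt (eps / 2) g S' v / Zs (eps / 2) g S'.
have q0 : 0 <= q by rewrite divr_ge0 ?wgt_ge0 ?Zs_ge0.
have -> : wgt (eps / 2) g S' v = q * Zs (eps / 2) g S'.
  by rewrite /q divfK.
have Z2' : 0 <= e * Zs (eps / 2) g S - Zs (eps / 2) g S' by rewrite subr_ge0.
have := mulr_ge0 (mulr_ge0 e0 q0) Z2'. nra.
Qed.

Definition pbot d : Defs.prefix d :=
  @Tagged 'I_d.+1 ord0 (fun l : 'I_d.+1 => l.-tuple bool) [tuple].

Lemma mech_dist (R : realType) (c g : R) d n (S : dataset d n) :
  is_distribution (mech c g S).
Proof.
split.
  move=> v; rewrite ffunE; case: ifP => _; first by rewrite invr_ge0 ler0n.
  by rewrite divr_ge0 ?wgt_ge0 ?Zs_ge0.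
case: (eqVneq (Zs c g S) 0) => Z0.
  under eq_bigr do rewrite ffunE Z0 eqxx.
  have Np : (0 < #|{: Defs.prefix d}|)%N.
    by apply/card_gt0P; exists (pbot d).
  rewrite sumr_const; move: Np; set N := #|{: Defs.prefix d}|; move=> Np.

  by rewrite -(mulr_natl (N%:R^-1)) mulfV // pnatr_eq0 -lt0n.
under eq_bigr do rewrite ffunE (negbTE Z0).
by rewrite -mulr_suml divff.
Qed.

Lemma count_tuple_sum (T : Type) n (t : n.-tuple T) (a : pred T) :
  count a t = (\sum_(j < n) a (tnth t j))%N.
Proof.
rewrite -sum1_count big_tuple big_mkcond /=.
by apply: eq_bigr => j _; case: (a _).
Qed.

Lemma pol_ge (R : realType) d n s (S : dataset d n) (x : R) b :
  (0 < n)%N -> x <= pol R s S -> x * n%:R <= (fcount s b S)%:R.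
Proof.
move=> n0; rewrite /pol ler_pdivlMr ?ltr0n // => h; apply: le_trans h _.
by rewrite ler_nat; case: b; [exact: geq_minr | exact: geq_minl].
Qed.

Lemma pol_lt (R : realType) d n s (S : dataset d n) (x : R) :
  (0 < n)%N -> pol R s S < x -> exists b, (fcount s b S)%:R < x * n%:R.
Proof.
move=> n0; rewrite /pol ltr_pdivrMr ?ltr0n //.
case: (leqP (fcount s false S) (fcount s true S)) => h.
  by move=> H; exists false.
by move=> H; exists true.
Qed.

Lemma cnt_diff n (P Q : pred 'I_n) :
  (\sum_(j < n) Q j <= \sum_(j < n) P j + #|[set j | Q j && ~~ P j]|)%N.
Proof.
rewrite -sum1_card [X in (_ + X)%N]big_mkcond -big_split /=.
apply: leq_sum. move=> j _.
by rewrite in_set; case: (P j); case: (Q j).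
Qed.

Lemma cnt_dist d n (S S2 : dataset d n) (p : pred (example d)) :
  (count p S <= count p S2 + dsdist S S2)%N.
Proof.
rewrite !count_tuple_sum /dsdist -big_split /=.
refine (@leq_sum _ _ _ (fun j => nat_of_bool (p (tnth S j))) (fun i => p (tnth S2 i) + attr_dist (tnth S i) (tnth S2 i))%N _). move=> j _.
case: (boolP (p (tnth S j))) => //= pS.
case: (boolP (p (tnth S2 j))) => //= pS2.
rewrite add0n attr_dist_ge1 //; apply: contraNneq pS2 => <-; exact: pS.
Qed.

Definition ham d (x : d.-tuple bool) (v : Defs.prefix d) : nat :=
  (\sum_(i < tag v) (nth false x i != nth false (pseq v) i))%N.

Lemma ham_le d (e e2 : example d) (v : Defs.prefix d) :
  take (size (pseq v)) e2.1 = pseq v -> (ham e.1 v <= attr_dist e e2)%N.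
Proof.
move=> h; rewrite /ham.
have sv : size (pseq v) = tag v by rewrite /pseq size_tuple.
have lv : (tag v <= d)%N by rewrite -ltnS ltn_ord.
rewrite (eq_bigr (fun i : 'I_(tag v) => (nth false e.1 i != nth false e2.1 i : nat))); last first.
  by move=> i _; rewrite -h nth_take // sv.
rewrite (big_ord_widen d (fun i => (nth false e.1 i != nth false e2.1 i : nat))) //.
apply: (@leq_trans (\sum_(i < d) (nth false e.1 i != nth false e2.1 i : nat))).
  by rewrite big_mkcond /=; apply: leq_sum; move=> i _; case: ifP.
apply: (@leq_trans #|[set i : 'I_d | tnth e.1 i != tnth e2.1 i]|); last first.
  by rewrite /attr_dist leq_addr.
rewrite -sum1_card [X in (_ <= X)%N]big_mkcond /=; apply: leq_sum; move=> i _.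
by rewrite in_set !(tnth_nth false); case: (_ != _).
Qed.

Lemma sum_prefix (R' : Type) (idx : R') (op : Monoid.com_law idx) d
    (G : Defs.prefix d -> R') :
  \big[op/idx]_(v : Defs.prefix d) G v =
  \big[op/idx]_(l < d.+1) \big[op/idx]_(t : l.-tuple bool)
     G (Tagged (fun l : 'I_d.+1 => l.-tuple bool) t).
Proof.
rewrite (@sig_big_dep _ _ op 'I_d.+1 (fun l : 'I_d.+1 => l.-tuple bool) (fun _ => true)
  (fun (l : 'I_d.+1) (t : l.-tuple bool) => true)
  (fun (l : 'I_d.+1) (t : l.-tuple bool) => G (Tagged (fun l : 'I_d.+1 => l.-tuple bool) t))) /=.
by apply: eq_big => // -[l t].
Qed.

Lemma sum_ham (R : realType) (a : R) d (x : d.-tuple bool) :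
  \sum_(v : Defs.prefix d) expR (- a * (1 + (ham x v)%:R)) =
  \sum_(l < d.+1) expR (- a) * (1 + expR (- a)) ^+ l.
Proof.
rewrite sum_prefix; apply: eq_bigr => l _.
transitivity (\sum_(t : l.-tuple bool)
   expR (- a) * \prod_(i < l) expR (- a) ^+ (nth false x i != nth false t i)).
  apply: eq_bigr => t _; rewrite mulrDr mulr1 expRD; congr (_ * _).
  by rewrite /ham /= expRM_natr expr_sum.
rewrite -mulr_sumr; congr (_ * _).
rewrite (reindex (@tuple_of_finfun bool l)); last first.
  apply: onW_bij; exists (@finfun_of_tuple bool l).
    exact: tuple_of_finfunK.
  exact: finfun_of_tupleK.
rewrite (eq_bigr (fun f : {ffun 'I_l -> bool} =>
    \prod_(i < l) expR (- a) ^+ (nth false x i != f i))); last first.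
  move=> f _; apply: eq_bigr => i _.
  by rewrite -(tnth_nth false) /tuple_of_finfun tnth_map tnth_ord_tuple.
transitivity (\prod_(i < l) \sum_(b : bool) expR (- a) ^+ (nth false x i != b)).
  by rewrite (bigA_distr_bigA (fun (i : 'I_l) (b : bool) => expR (- a) ^+ (nth false x i != b))).
rewrite (eq_bigr (fun _ => 1 + expR (- a))) ?prodr_const ?card_ord //.
move=> i _; rewrite big_bool /=.
by case: (nth false x i) => /=; rewrite ?expr1 ?expr0 // addrC.
Qed.

Lemma expR_half_le2 (R : realType) : expR (1/2 : R) <= 2.
Proof.
have h1 := expR_ge1Dx (- (1/2) : R).
have h2 := expRxMexpNx_1 (1/2 : R).
have h3 := expR_gt0 (1/2 : R).
nra.
Qed.

Lemma sum_geom_le (R : realType) (r : R) d :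
  0 <= r -> d%:R * r <= 1/2 ->
  \sum_(l < d.+1) r * (1 + r) ^+ l <= d.+1%:R * (2 * r).
Proof.
move=> r0 dr.
have B (l : 'I_d.+1) : r * (1 + r) ^+ l <= 2 * r.
  rewrite mulrC ler_wpM2r //.
  apply: (@le_trans _ _ (expR r ^+ l)).
    by apply: lerXn2r; rewrite ?nnegrE ?expR_ge0 ?addr_ge0 // expR_ge1Dx.
  rewrite -expRM_natr; apply: le_trans (expR_half_le2 R); rewrite ler_expR.
  apply: le_trans dr; rewrite mulrC ler_wpM2r // ler_nat -ltnS; exact: ltn_ord.
apply: le_trans (ler_sum _ (fun l _ => B l)) _.
by rewrite sumr_const card_ord [X in _ <= X]mulr_natl.
Qed.

Lemma sum_fcount d n (S : dataset d n) b :
  (\sum_(v : Defs.prefix d) fcount (pseq v) b S <= d.+1 * n)%N.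
Proof.
rewrite /fcount.
under eq_bigr do rewrite count_tuple_sum.
rewrite exchange_big /=.
apply: (@leq_trans (\sum_(j < n) d.+1)%N); last by rewrite sum_nat_const card_ord mulnC.
apply: leq_sum; move=> j _.
set e := tnth S j.
apply: (@leq_trans (\sum_(v : Defs.prefix d) (take (size (pseq v)) e.1 == pseq v : nat))).
  by apply: leq_sum; move=> v _; case: (_ == _); case: (_ == _).
rewrite sum_prefix -[X in (_ <= X)%N]card_ord -sum1_card; apply: leq_sum; move=> l _.
rewrite (eq_bigr (fun t : l.-tuple bool => (take l e.1 == tval t : nat))); last first.
  by move=> t _; rewrite /pseq /= size_tuple.
apply: (@leq_trans #|[pred t : l.-tuple bool | take l e.1 == tval t]|).
  rewrite -sum1_card [X in (_ <= X)%N]big_mkcond /=; apply: leq_sum; move=> t _.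
  by rewrite inE; case: (_ == _).
apply/card_le1_eqP => t1 t2; rewrite !inE => /eqP h1 /eqP h2.
by apply: val_inj; rewrite /= -h1 -h2.
Qed.

Lemma amgm_exp (R : realType) (I : finType) (J : {set I}) (h : I -> R) (al mr : R) :
  0 <= al -> 0 < mr -> mr <= #|J|%:R -> (forall j, 0 <= h j) ->
  \prod_(j in J) expR (- al * h j) <= mr^-1 * \sum_(j in J) expR (- al * mr * h j).
Proof.
move=> al0 mr0 mJ h0.
have m0 : (0 < #|J|)%N by rewrite -(ltr_nat R); apply: lt_le_trans mJ.
pose E := fun j => expR (- al * h j) ^+ #|J|.
have agm := (@leif_AGM R I (mem J) E _).1.
have E0 : {in mem J, forall i, 0 <= E i} by move=> j _; rewrite exprn_ge0 ?expR_ge0.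
move: (agm E0) => {}agm.
apply: (@le_trans _ _ ((\sum_(j in J) E j) / #|J|%:R)).
  rewrite -(@ler_pXn2r _ #|J|) // ?nnegrE ?prodr_ge0 ?divr_ge0 ?sumr_ge0 //;
    try by move=> *; rewrite ?expR_ge0 ?E0.
  by rewrite -prodrXl.
apply: (@le_trans _ _ ((\sum_(j in J) expR (- al * mr * h j)) / #|J|%:R)).
  rewrite ler_wpM2r ?invr_ge0 ?ler0n //; apply: ler_sum => j _.
  rewrite /E -expRM_natr ler_expR.
  have : 0 <= al * h j * (#|J|%:R - mr).
    by rewrite mulr_ge0 ?mulr_ge0 ?h0 // subr_ge0.
  nra.
rewrite [X in _ <= X]mulrC; apply: ler_wpM2l.
  by apply: sumr_ge0 => *; exact: expR_ge0.
by rewrite lef_pV2 ?posrE ?ltr0n.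
Qed.

Definition Bv (R : realType) (eps g : R) d n (S : dataset d n) (v : Defs.prefix d) : R :=
  (g * n%:R / 4)^-1 * \sum_(j < n) expR (- (eps * g * n%:R / 16) * (1 + (ham (tnth S j).1 v)%:R))
  + expR (- (eps * g * n%:R / 8)) * (fcount (pseq v) false S)%:R / (g * n%:R).

Lemma Bv_parts_ge0 (R : realType) (eps g : R) d n (S : dataset d n) (v : Defs.prefix d) :
  0 < g ->
  0 <= (g * n%:R / 4)^-1 * \sum_(j < n) expR (- (eps * g * n%:R / 16) * (1 + (ham (tnth S j).1 v)%:R))
  /\ 0 <= expR (- (eps * g * n%:R / 8)) * (fcount (pseq v) false S)%:R / (g * n%:R).
Proof.
move=> g0; have gn : 0 <= g * n%:R by apply: mulr_ge0; [exact: ltW | exact: ler0n].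
split.
  apply: mulr_ge0; first by rewrite invr_ge0 divr_ge0.
  by apply: sumr_ge0 => *; exact: expR_ge0.
by rewrite divr_ge0 // mulr_ge0 ?expR_ge0.
Qed.

Lemma bad_bound (R : realType) (eps g : R) d n (S S2 : dataset d n) (v : Defs.prefix d) :
  0 < eps -> 0 < g -> (0 < n)%N -> v \notin good g S -> Pg g S2 v ->
  expR (- (eps / 2) * (dsdist S S2)%:R) <= Bv eps g S v.
Proof.
move=> ep g0 n0 vb /andP [Pv Pq].
have n0' : 0 < n%:R :> R by rewrite ltr0n.
have gn0 : 0 < g * n%:R by rewrite mulr_gt0.
have [T1 T2] := Bv_parts_ge0 eps S v g0.
case: (boolP (polarizing g (pseq v) S)) => pv.
  have [q /andP [lq pq]] : exists q : Defs.prefix d,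
      (size (pseq v) < size (pseq q))%N && polarizing (2 * g) (pseq q) S.
    move: vb; rewrite inE pv /= negb_forall => /existsP [q].
    by rewrite negb_imply negbK => hq; exists q.
  move/forallP/(_ q): Pq; rewrite lq /= /polarizing -ltNge => /(pol_lt n0) [b hb].
  have h2 := pol_ge b n0 pq.
  have hd : (fcount (pseq q) b S <= fcount (pseq q) b S2 + dsdist S S2)%N :=
    cnt_dist S S2 (fun e => (take (size (pseq q)) e.1 == pseq q) && (e.2 == b)).
  move: hd; rewrite -(ler_nat R) natrD => hd.
  have pvf := pol_ge false n0 pv.
  apply: (@le_trans _ _ (expR (- (eps * g * n%:R / 8)))).
    rewrite ler_expR.
    have : 0 <= eps * ((dsdist S S2)%:R - g * n%:R / 4).
      by apply: mulr_ge0; [exact: ltW | rewrite subr_ge0; lra].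
    nra.
  rewrite /Bv; apply: ler_wpDl => //.
  by rewrite -[X in _ <= X]mulrA ler_peMr ?expR_ge0 // ler_pdivlMr // mul1r.
rewrite /polarizing -ltNge in pv; case: (pol_lt n0 pv) => b hb.
have h2 := pol_ge b n0 Pv.
pose p := fun e : example d => (take (size (pseq v)) e.1 == pseq v) && (e.2 == b).
pose J := [set j : 'I_n | p (tnth S2 j) && ~~ p (tnth S j)].
have hJ : (fcount (pseq v) b S2 <= fcount (pseq v) b S + #|J|)%N.
  rewrite /fcount !count_tuple_sum.
  exact: (cnt_diff (fun j => p (tnth S j)) (fun j => p (tnth S2 j))).
move: hJ; rewrite -(ler_nat R) natrD => hJ.
have mJ : g * n%:R / 4 <= #|J|%:R by lra.
have hj : forall j, j \in J ->
    (1 + ham (tnth S j).1 v <= 2 * attr_dist (tnth S j) (tnth S2 j))%N.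
  move=> j; rewrite inE => /andP [p2 p1].
  have ne : tnth S j != tnth S2 j by apply: contraNneq p1 => ->.
  have a1 := attr_dist_ge1 ne.
  have hl : (ham (tnth S j).1 v <= attr_dist (tnth S j) (tnth S2 j))%N.
    by apply: ham_le; move/andP: p2 => [/eqP -> _].
  by rewrite mul2n -addnn leq_add.
have hsum : (\sum_(j in J) (1 + ham (tnth S j).1 v) <= 2 * dsdist S S2)%N.
  apply: (@leq_trans (\sum_(j in J) 2 * attr_dist (tnth S j) (tnth S2 j))%N).
    by apply: leq_sum; move=> j /hj.
  rewrite -big_distrr /= leq_mul2l /dsdist; apply/orP; right.
  rewrite [X in (_ <= X)%N](bigID (mem J)) /=; exact: leq_addr.
move: hsum; rewrite -(ler_nat R) natr_sum natrM.
under eq_bigr do rewrite natrD.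
move=> hsum.
apply: (@le_trans _ _ (expR (- (eps / 4) * \sum_(j in J) (1 + (ham (tnth S j).1 v)%:R)))).
  rewrite ler_expR.
  have : 0 <= eps * (2 * (dsdist S S2)%:R - \sum_(j in J) (1 + (ham (tnth S j).1 v)%:R)).
    by apply: mulr_ge0; [exact: ltW | rewrite subr_ge0].
  nra.
rewrite mulr_sumr (big_morph expR (@expRD R) (expR0 R)).
apply: (@le_trans _ _ ((g * n%:R / 4)^-1 * \sum_(j in J)
     expR (- (eps / 4) * (g * n%:R / 4) * (1 + (ham (tnth S j).1 v)%:R)))).
  apply: amgm_exp => //.
  - by rewrite divr_ge0 ?ltW.
  - by rewrite divr_gt0.
  - by move=> j; rewrite addr_ge0 ?ler0n.
rewrite /Bv; apply: ler_wpDr => //.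
apply: ler_wpM2l; first by rewrite invr_ge0 divr_ge0 ?ltW.
rewrite [X in _ <= X](bigID (mem J)) /= -[X in X <= _]addr0; apply: lerD.
  apply: ler_sum => j _; rewrite le_eqVlt; apply/orP; left; apply/eqP.
  by congr expR; field.
by apply: sumr_ge0 => *; exact: expR_ge0.
Qed.

Lemma sumB (R : realType) (eps g : R) d n (S : dataset d n) :
  0 < eps -> 0 < g -> (0 < n)%N ->
  d%:R * expR (- (eps * g * n%:R / 16)) <= 1/2 ->
  \sum_(v : Defs.prefix d) Bv eps g S v <=
    9 * d.+1%:R * expR (- (eps * g * n%:R / 16)) * g^-1.
Proof.
move=> ep g0 n0 dr.
set r := expR (- (eps * g * n%:R / 16)).
have r0 : 0 <= r := expR_ge0 _.
have n0' : 0 < n%:R :> R by rewrite ltr0n.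
have gn0 : 0 < g * n%:R by rewrite mulr_gt0.
rewrite /Bv big_split /=.
have A : \sum_(v : Defs.prefix d) (g * n%:R / 4)^-1 * \sum_(j < n)
      expR (- (eps * g * n%:R / 16) * (1 + (ham (tnth S j).1 v)%:R))
    <= (g * n%:R / 4)^-1 * (n%:R * (d.+1%:R * (2 * r))).
  rewrite -mulr_sumr; apply: ler_wpM2l; first by rewrite invr_ge0 divr_ge0 ?ltW.
  rewrite exchange_big /=.
  apply: (@le_trans _ _ (\sum_(j < n) d.+1%:R * (2 * r))).
    by apply: ler_sum => j _; rewrite sum_ham; exact: sum_geom_le.
  by rewrite sumr_const card_ord [X in _ <= X]mulr_natl.
have B : \sum_(v : Defs.prefix d) expR (- (eps * g * n%:R / 8)) *
      (fcount (pseq v) false S)%:R / (g * n%:R)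
    <= expR (- (eps * g * n%:R / 8)) * (d.+1 * n)%:R / (g * n%:R).
  rewrite -mulr_suml -mulr_sumr -natr_sum.
  apply: ler_wpM2r; first by rewrite invr_ge0 ltW.
  apply: ler_wpM2l; first exact: expR_ge0.
  rewrite ler_nat; exact: sum_fcount.
have E8 : expR (- (eps * g * n%:R / 8)) <= r.
  rewrite ler_expR; have : 0 <= eps * g * n%:R by rewrite !mulr_ge0 ?ltW.
  lra.
apply: le_trans (lerD A B) _.
have -> : (g * n%:R / 4)^-1 * (n%:R * (d.+1%:R * (2 * r))) =
          8 * d.+1%:R * r * g^-1.
  by field; rewrite !gt_eqF.
have -> : expR (- (eps * g * n%:R / 8)) * (d.+1 * n)%:R / (g * n%:R) =
          expR (- (eps * g * n%:R / 8)) * d.+1%:R * g^-1.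
  by rewrite natrM; field; rewrite !gt_eqF.
have gi : 0 <= d.+1%:R * g^-1 by rewrite mulr_ge0 ?invr_ge0 ?ltW.
have E8' : 0 <= r - expR (- (eps * g * n%:R / 8)) by rewrite subr_ge0.
have := mulr_ge0 gi E8'.
nra.
Qed.

Lemma ln_lb (R : realType) (x : R) : 0 < x -> 1 - x^-1 <= ln x.
Proof.
move=> x0.
have h : -1 < x^-1 - 1.
  have : 0 < x^-1 by rewrite invr_gt0.
  lra.
have := le_ln1Dx h; rewrite addrC subrK lnV ?posrE //.
lra.
Qed.

Lemma inv_le (R : realType) (x c : R) : 0 < c -> c <= x -> x^-1 <= c^-1.
Proof.
move=> c0 cx; rewrite lef_pV2 ?posrE //; exact: lt_le_trans cx.
Qed.

Lemma numeric (R : realType) (eps g : R) d n :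
  0 < eps -> 0 < g -> g <= 1 ->
  (1000 * 100) / (eps * g) * ln (d%:R + 2) * (ln (g^-1) + ln (ln (d%:R + 3)) + 2) ^+ 1
    <= n%:R ->
  expR (- (eps * g * n%:R / 16)) <= g / (900 * d.+1%:R).
Proof.
move=> ep g0 g1; rewrite expr1.
set P := ln (d%:R + 2); set G := ln (g^-1); set L2 := ln (ln (d%:R + 3)).
move=> hyp.
have d0 : 0 <= d%:R :> R by rewrite ler0n.
have hP : 1/2 <= P.
  have := ln_lb (_ : 0 < d%:R + 2 :> R); rewrite -/P => h.
  have : (d%:R + 2 :> R)^-1 <= 2^-1 by apply: inv_le; lra.
  have := h ltac:(lra); lra.
have h3 : 2/3 <= ln (d%:R + 3 :> R).
  have := ln_lb (_ : 0 < d%:R + 3 :> R) => h.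
  have : (d%:R + 3 :> R)^-1 <= 3^-1 by apply: inv_le; lra.
  have := h ltac:(lra); lra.
have hL2 : -1/2 <= L2.
  have := ln_lb (_ : 0 < ln (d%:R + 3 :> R)) => h.
  have : (ln (d%:R + 3 :> R))^-1 <= (2/3)^-1 by apply: inv_le; lra.
  have -> : (2/3 : R)^-1 = 3/2 by field.
  have := h ltac:(lra); rewrite -/L2; lra.
have hG : 0 <= G by rewrite /G ln_ge0 // invf_ge1.
have hD : ln (d.+1%:R : R) <= P.
  rewrite /P ler_ln ?posrE ?ltr0n //; last lra.
  by rewrite -natr1; lra.
have h900 : ln (900 : R) <= 899.
  have := @le_ln1Dx R 899 ltac:(lra).
  by have -> : (1 + 899 : R) = 900 by lra.
have hC : (1000 * 100) * P * (G + L2 + 2) <= eps * g * n%:R.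
  have egp : 0 < eps * g by rewrite mulr_gt0.
  have -> : (1000 * 100) * P * (G + L2 + 2) =
            (1000 * 100) / (eps * g) * P * (G + L2 + 2) * (eps * g).
    by field; rewrite !gt_eqF.
  by rewrite [X in _ <= X]mulrC ler_pM2r //.
have gp : 0 < g / (900 * d.+1%:R) by rewrite divr_gt0 // mulr_gt0 ?ltr0n.
rewrite -[X in _ <= X](lnK (_ : _ \is Num.pos)) ?posrE // ler_expR.
have -> : ln (g / (900 * d.+1%:R)) = - (ln 900 + ln (d.+1%:R : R) + G).
  rewrite /G lnM ?posrE ?invr_gt0 ?mulr_gt0 ?ltr0n // invfM lnM ?posrE ?invr_gt0 ?ltr0n //.
  rewrite !lnV ?posrE ?ltr0n //; lra.
have h1 : 0 <= (P - 1/2) * G by rewrite mulr_ge0 // subr_ge0.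
have h2 : 0 <= P * (L2 + 1/2) by rewrite mulr_ge0 //; lra.
nra.
Qed.

Lemma main_util (R : realType) (eps g : R) d n (S : dataset d n) :
  0 < eps -> 0 < g -> 2 * g <= pol R [::] S ->
  (forall g1 : g <= 1, expR (- (eps * g * n%:R / 16)) <= g / (900 * d.+1%:R)) ->
  99 / 100 <= Pr (mech (eps / 2) g S) (good g S).
Proof.
move=> ep g0 hpol hr.
have n0 : (0 < n)%N.
  case: n S hpol {hr} => // S; rewrite /pol invr0 mulr0; lra.
have n0' : 0 < n%:R :> R by rewrite ltr0n.
have g1 : g <= 1.
  have : pol R [::] S <= 1.
    rewrite /pol ler_pdivrMr // mul1r ler_nat.
    apply: leq_trans (geq_minl _ _) _; rewrite /fcount.
    by apply: leq_trans (count_size _ _) _; rewrite size_tuple.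
  lra.
move: (hr g1) => {}hr.
set r := expR (- (eps * g * n%:R / 16)) in hr.
have D0 : 0 < 900 * d.+1%:R :> R by rewrite mulr_gt0 ?ltr0n.
have hr' : r * (900 * d.+1%:R) <= g by rewrite -ler_pdivlMr.
have r0 : 0 <= r := expR_ge0 _.
have dr : d%:R * r <= 1/2.
  move: hr'; rewrite -natr1 => hr'.
  have : 0 <= d%:R :> R by rewrite ler0n.
  nra.
pose P := fun v : Defs.prefix d => polarizing (3/2 * g) (pseq v) S.
have Pb : P (pbot d) by rewrite /P /polarizing; lra.
case: (arg_maxnP (fun v => size (pseq v)) Pb) => vm Pvm Hmax.
have Pgv : Pg g S vm.
  apply/andP; split.
    by rewrite /polarizing; apply: le_trans Pvm; lra.
  apply/forallP => q; apply/implyP => lq; apply/negP => pq.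
  have Pq : P q by rewrite /P /polarizing; apply: le_trans pq; lra.
  by have := Hmax q Pq; rewrite /geq /= leqNgt lq.
have w1 : 1 <= wgt (eps / 2) g S vm.
  rewrite /wgt; apply: le_trans (@le_bigmax_cond _ _ _ 0 S _ _ Pgv).
  rewrite /dsdist big1 ?mulr0 ?expR0 // => j _; exact: attr_dist_refl.
have Z1 : 1 <= Zs (eps / 2) g S.
  rewrite /Zs (bigD1 vm) //=; apply: ler_wpDr w1.
  by apply: sumr_ge0 => v _; exact: wgt_ge0.
have Zp : 0 < Zs (eps / 2) g S by apply: lt_le_trans Z1.
have Zn0 : Zs (eps / 2) g S != 0 by rewrite gt_eqF.
have tot := (mech_dist (eps / 2) g S).2.
rewrite (bigID (fun v => v \in good g S)) /= in tot.
have bad : \sum_(v | v \notin good g S) mech (eps / 2) g S v <= 1/100.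
  apply: (@le_trans _ _ (\sum_(v | v \notin good g S) Bv eps g S v)).
    apply: ler_sum => v vb; rewrite ffunE (negbTE Zn0).
    apply: (@le_trans _ _ (wgt (eps / 2) g S v)).
      by rewrite ler_pdivrMr // ler_peMr ?wgt_ge0.
    rewrite /wgt; apply: bigmax_le.
      by have [T1 T2] := Bv_parts_ge0 eps S v g0; rewrite addr_ge0.
    by move=> S2 PS2; apply: bad_bound.
  apply: (@le_trans _ _ (\sum_(v : Defs.prefix d) Bv eps g S v)).
    rewrite [X in _ <= X](bigID (fun v => v \notin good g S)) /=.
    apply: ler_wpDr => //; apply: sumr_ge0 => v _.
    by have [T1 T2] := Bv_parts_ge0 eps S v g0; rewrite addr_ge0.
  apply: le_trans (sumB S ep g0 n0 dr) _.
  rewrite -/r.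
  have gi : 0 < g^-1 by rewrite invr_gt0.
  have : g * g^-1 = 1 by rewrite mulfV ?gt_eqF.
  nra.
rewrite /Pr; lra.
Qed.

Unset Implicit Arguments.

Theorem lemmaA5 (R : realType) :
  exists (C : R) (k : nat), 0 < C /\
  forall eps gamma : R, 0 < eps -> 0 < gamma ->
  exists M : mechanism R,
    (forall d n (S : dataset d n), is_distribution (M d n S)) /\
    nabla0DP eps M /\
    forall (d n : nat) (S : dataset d n),
      C / (eps * gamma) * ln (d%:R + 2)
        * (ln (gamma^-1) + ln (ln (d%:R + 3)) + 2) ^+ k <= n%:R ->
      2 * gamma <= pol R [::] S ->
      99 / 100 <= Pr (M d n S) (good gamma S).
Proof.
exists (1000 * 100), 1%N; split; first by rewrite mulr_gt0 ?ltr0n.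
move=> eps gamma ep g0; exists (mech (eps / 2) gamma); split.
  by move=> d n S; exact: mech_dist.
split; first exact: mech_dp.
move=> d n S hn hpol; apply: main_util => // g1.
exact: numeric.
Qed.
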